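(* Let $(\rho_n)$ be a sequence of positive functions on $\mathbb{R}^2$ such that there exist $r>0$ and $\sigma>0$ with $\int_{B_r(0)}\rho_n\,dx>\sigma$ for all $n\in\mathbb{N}$. Let $(u_n)$ be bounded in $L^2(\mathbb{R}^2)$ with $\sup_n B_1(\rho_n,u_n^2)<+\infty$. Then $\int_{\mathbb{R}^2}\log(1+|x|)u_n^2(x)\,dx$ is bounded in $n$. If moreover $B_1(\rho_n,u_n^2)\to0$ and $\|u_n\|_2\to0$, then $\int_{\mathbb{R}^2}\log(1+|x|)u_n^2(x)\,dx\to0$ as $n\to\infty$.
   Context: $B_1(f,g):=\iint_{\mathbb{R}^2\times\mathbb{R}^2}\log(1+|x-y|)f(x)g(y)\,dx\,dy$ for nonnegative measurable $f,g$; $B_r(x)$ is the ball of radius $r$ centered at $x$. *)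

(* Defs.v *)
From HB Require Import structures.
From mathcomp Require Import all_boot all_order all_algebra.
From mathcomp Require Import all_classical all_reals all_analysis.
Set Implicit Arguments. Unset Strict Implicit. Unset Printing Implicit Defensive.
Import Order.TTheory GRing.Theory Num.Theory.
Local Open Scope classical_set_scope.
Local Open Scope ring_scope.

(* R^2 is modelled as R * R with the product Lebesgue measure. *)
Definition leb2 (R : realType) :=
  ((@lebesgue_measure R) \x (@lebesgue_measure R))%E.
Arguments leb2 R : clear implicits.

Definition norm2 (R : realType) (x : R * R) : R :=
  Num.sqrt (x.1 ^+ 2 + x.2 ^+ 2).

Definition ball2 (R : realType) (c : R * R) (r : R) : set (R * R) :=
  [set x | norm2 (x.1 - c.1, x.2 - c.2) < r].

(* B_1(f,g) = \iint log(1+|x-y|) f(x) g(y) dx dy, for nonnegative f, g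
   (as an iterated integral in \bar R; equal to the product integral by Tonelli). *)
Definition B1 (R : realType) (f g : R * R -> R) : \bar R :=
  (\int[leb2 R]_x \int[leb2 R]_y
     (ln (1 + norm2 (x.1 - y.1, x.2 - y.2)) * f x * g y)%:E)%E.

(* Main.v *)
Require Import Defs.
From HB Require Import structures.
From mathcomp Require Import all_boot all_order all_algebra.
From mathcomp Require Import all_classical all_reals all_analysis.
From mathcomp Require Import measurable_realfun.
From mathcomp Require Import ring lra.
Import Order.TTheory GRing.Theory Num.Theory.
Local Open Scope classical_set_scope.
Local Open Scope ring_scope.
Section aux.
Context (R : realType).

Lemma norm2_ge0 (x : R * R) : 0 <= norm2 x.
Proof. exact: sqrtr_ge0. Qed.

Lemma norm2_tri (a b c d : R) :
  norm2 (a + c, b + d) <= norm2 (a, b) + norm2 (c, d).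
Proof.
rewrite /norm2 /=.
set P := a ^+ 2 + b ^+ 2; set Q := c ^+ 2 + d ^+ 2.
have P0 : 0 <= P by rewrite /P addr_ge0 // sqr_ge0.
have Q0 : 0 <= Q by rewrite /Q addr_ge0 // sqr_ge0.
have S0 : 0 <= Num.sqrt P + Num.sqrt Q by rewrite addr_ge0 // sqrtr_ge0.
rewrite -[X in _ <= X]ger0_norm // -sqrtr_sqr ler_sqrt; last by rewrite sqr_ge0.
rewrite [X in _ <= X]sqrrD !sqr_sqrtr // -sqrtrM //.
have CS : a * c + b * d <= Num.sqrt (P * Q).
  have [h|h] := lerP (a * c + b * d) 0.
    by apply: le_trans h _; rewrite sqrtr_ge0.
  rewrite -[X in X <= _](ger0_norm (ltW h)) -sqrtr_sqr ler_sqrt; last first.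
    by rewrite mulr_ge0.
  rewrite /P /Q; have := sqr_ge0 (a * d - b * c); nra.
move: CS; rewrite /P /Q mulr2n; nra.
Qed.

Lemma norm2N (a b : R) : norm2 (a, b) = norm2 (- a, - b).
Proof. by rewrite /norm2 /= !sqrrN. Qed.

Lemma log_tri (x y : R * R) (r : R) :
  norm2 (x.1 - 0, x.2 - 0) < r ->
  ln (1 + norm2 y) <= ln (1 + norm2 (x.1 - y.1, x.2 - y.2)) + ln (1 + r).
Proof.
rewrite !subr0 => xr.
set p := norm2 (x.1 - y.1, x.2 - y.2).
have p0 : 0 <= p by exact: norm2_ge0.
have q0 : 0 <= norm2 (x.1, x.2) by exact: norm2_ge0.
have r0 : 0 < r by exact: le_lt_trans q0 xr.
have ny : norm2 y <= p + norm2 (x.1, x.2).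
  have -> : y = ((y.1 - x.1) + x.1, (y.2 - x.2) + x.2).
    by rewrite !subrK; case: (y).
  rewrite /p.
  apply: le_trans (norm2_tri _ _ _ _) _.
  by rewrite norm2N !opprB.
have ny0 : 0 <= norm2 y by exact: norm2_ge0.
rewrite -lnM ?posrE; [|lra|lra].
rewrite ler_ln ?posrE; [|lra|nra].
nra.
Qed.

End aux.
Section meas.
Context (R : realType) d (T : measurableType d).

Lemma mnorm2 (f g : T -> R) : measurable_fun setT f -> measurable_fun setT g ->
  measurable_fun setT (fun t => norm2 (f t, g t)).
Proof.
move=> mf mg.
rewrite /norm2 /=.
apply: measurableT_comp; first exact: (continuous_measurable_fun (@sqrt_continuous R)).
by apply: measurable_funD; apply: measurable_funX.
Qed.

Lemma mlnorm (f g : T -> R) : measurable_fun setT f -> measurable_fun setT g ->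
  measurable_fun setT (fun t => ln (1 + norm2 (f t, g t))).
Proof.
move=> mf mg.
apply: measurableT_comp; first exact: measurable_ln.
apply: measurable_funD; first exact: measurable_cst.
exact: mnorm2.
Qed.

End meas.

Section leb2sf.
Context (R : realType).
Local Open Scope ereal_scope.
Lemma leb2_sf : sigma_finite setT (leb2 R).
Proof.
have /sigma_finiteP[F [TF ndF Foo]] := sigma_finiteT (@lebesgue_measure R).
exists (fun n => F n `*` F n).
 rewrite -setXTT TF predeqE => -[x y]; split.
    move=> [/= [n _ Fnx] [k _ Gky]]; exists (maxn n k) => //; split.
    - by move: x Fnx; exact/subsetPset/ndF/leq_maxl.
    - by move: y Gky; exact/subsetPset/ndF/leq_maxr.
  by move=> [n _ []/= ? ?]; split; exists n.
move=> k; have [? ?] := Foo k.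
split; first exact: measurableX.
by rewrite /leb2 product_measure1E// lte_mul_pinfty// ge0_fin_numE.
Qed.
End leb2sf.
HB.instance Definition _ (R : realType) := Measure.copy (leb2 R) ((@lebesgue_measure R) \x (@lebesgue_measure R))%E.
HB.instance Definition _ (R : realType) := @Measure_isSigmaFinite.Build _ _ _ (leb2 R) (leb2_sf R).
Section core.
Context (R : realType).
Local Open Scope ereal_scope.

Lemma mlnorm0 : measurable_fun setT (fun x : R * R => ln (1 + norm2 x)).
Proof.
have -> : (fun x : R * R => ln (1 + norm2 x)) = (fun x => ln (1 + norm2 (x.1, x.2))).
  by apply/funext => -[].
exact: mlnorm measurable_fst measurable_snd.
Qed.

Lemma core (rh u : R * R -> R) (r sigma M c : R) :
  measurable_fun setT rh -> (forall x, (0 <= rh x)%R) -> (0 < r)%R -> (0 < sigma)%R ->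
  sigma%:E < \int[leb2 R]_(x in ball2 (0%R, 0%R) r) (rh x)%:E ->
  measurable_fun setT u ->
  \int[leb2 R]_x (u x ^+ 2)%:E <= c%:E ->
  B1 rh (fun x => (u x ^+ 2)%R) <= M%:E ->
  \int[leb2 R]_x (ln (1 + norm2 x) * u x ^+ 2)%:E <= (M / sigma + ln (1 + r) * c)%:E.
Proof.
move=> mrh rh0 r0 s0 hs mu Nc BM.
set L := ln (1 + r).
have L0 : (0 <= L)%R by apply: ln_ge0; lra.
set N := \int[leb2 R]_x (u x ^+ 2)%:E.
have N0 : 0 <= N by apply: integral_ge0 => x _; rewrite lee_fin sqr_ge0.
have Nfin : N = (fine N)%:E.
  by apply/esym/fineK; rewrite ge0_fin_numE // (le_lt_trans Nc) ?ltry.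
set n := fine N.
have nc : (n <= c)%R by rewrite -lee_fin -Nfin.
set A := \int[leb2 R]_x (ln (1 + norm2 x) * u x ^+ 2)%:E.
have mu2 : measurable_fun setT (fun x => u x ^+ 2)%R by apply: measurable_funX.
have lnge0 : forall z : R * R, (0 <= ln (1 + norm2 z))%R.
  by move=> z; apply: ln_ge0; rewrite lerDl norm2_ge0.
pose F := (fun p : (R * R) * (R * R) =>
   (ln (1 + norm2 (p.1.1 - p.2.1, p.1.2 - p.2.2)) * rh p.1 * u p.2 ^+ 2)%:E).
have mF : measurable_fun setT F.
  apply/measurable_EFinP; apply: measurable_funM; [apply: measurable_funM|].
  - apply: mlnorm; apply: measurable_funB.
    + exact: measurableT_comp measurable_fst measurable_fst.
    + exact: measurableT_comp measurable_fst measurable_snd.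
    + exact: measurableT_comp measurable_snd measurable_fst.
    + exact: measurableT_comp measurable_snd measurable_snd.
  - exact: measurableT_comp mrh measurable_fst.
  - apply: measurable_funX; exact: measurableT_comp mu measurable_snd.
have F0 : forall p, 0 <= F p.
  by move=> p; rewrite lee_fin mulr_ge0 ?sqr_ge0 // mulr_ge0.
have mJ : measurable_fun setT (fun x => \int[leb2 R]_y F (x, y)).
  exact: (@measurable_fun_fubini_tonelli_F _ _ _ _ R (leb2 R) F mF F0).
have B0 : 0 <= B1 rh (fun x => (u x ^+ 2)%R).
  by apply: integral_ge0 => x _; apply: integral_ge0 => y _; exact: (F0 (x, y)).
have M0 : (0 <= M)%R by rewrite -lee_fin (le_trans B0 BM).
have mball : measurable (ball2 (0%R, 0%R) r).
  have mg : measurable_fun setT (fun x : R * R => norm2 (x.1 - 0, x.2 - 0))%R.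
    by apply: mnorm2; apply: measurable_funB.
  rewrite (_ : ball2 _ _ = (fun x : R * R => norm2 (x.1 - 0, x.2 - 0))%R @^-1` `]-oo, r[).
    by rewrite -[X in measurable X]setTI; apply: mg => //; exact: measurable_itv.
  by apply/seteqP; split => x /=; rewrite in_itv /=.
have key : forall d, (0 <= d)%R -> (d + L * n)%:E <= A -> (d <= M / sigma)%R.
  move=> d d0 hA.
  have pt : forall x, ball2 (0%R, 0%R) r x -> (rh x * d)%:E <= \int[leb2 R]_y F (x, y).
    move=> x bx.
    set P := \int[leb2 R]_y (ln (1 + norm2 (x.1 - y.1, x.2 - y.2)) * u y ^+ 2)%:E.
    have mP : measurable_fun setT (fun y : R * R => ln (1 + norm2 (x.1 - y.1, x.2 - y.2)) * u y ^+ 2)%R.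
      by apply: measurable_funM => //; apply: mlnorm; apply: measurable_funB.
    have P0 : forall y : R * R, (0 <= ln (1 + norm2 (x.1 - y.1, x.2 - y.2)) * u y ^+ 2)%R.
      by move=> y; rewrite mulr_ge0 ?sqr_ge0.
    have AP : A <= P + L%:E * N.
      apply: (@le_trans _ _ (\int[leb2 R]_y ((ln (1 + norm2 (x.1 - y.1, x.2 - y.2)) * u y ^+ 2) + L * u y ^+ 2)%:E)).
        apply: ge0_le_integral => //.
        - by move=> y _; rewrite lee_fin mulr_ge0 ?sqr_ge0.
        - by apply/measurable_EFinP; apply: measurable_funM => //; exact: mlnorm0.
        - apply/measurable_EFinP; apply: measurable_funD => //.
          by apply: measurable_funM.
        - move=> y _; rewrite lee_fin -mulrDl ler_wpM2r ?sqr_ge0 //.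
          exact: log_tri.
      under eq_integral => y _ do rewrite EFinD [(L * _)%:E]EFinM.
      rewrite ge0_integralD //.
      + rewrite ge0_integralZl_EFin //.
        * by move=> y _; rewrite lee_fin sqr_ge0.
        * by apply/measurable_EFinP.
      + by move=> y _; rewrite lee_fin.
      + by apply/measurable_EFinP.
      + by move=> y _; rewrite mule_ge0 // lee_fin sqr_ge0.
      + apply: emeasurable_funM => //.
        by apply/measurable_EFinP.
    have dP : d%:E <= P.
      rewrite Nfin -EFinM in AP.
      have := le_trans hA AP.
      by rewrite EFinD leeD2rE.
    have -> : \int[leb2 R]_y F (x, y) = (rh x)%:E * P.
      rewrite -ge0_integralZl_EFin //.
      + apply: eq_integral => y _; rewrite /F -EFinM /=; congr EFin; ring.
      + by move=> y _; rewrite lee_fin.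
      + by apply/measurable_EFinP.
    by rewrite EFinM; apply: lee_wpmul2l => //; rewrite lee_fin.
  have h1 : \int[leb2 R]_(x in ball2 (0%R, 0%R) r) (rh x * d)%:E <=
            \int[leb2 R]_(x in ball2 (0%R, 0%R) r) \int[leb2 R]_y F (x, y).
    apply: ge0_le_integral => //.
    - by move=> x _; rewrite lee_fin mulr_ge0.
    - apply/measurable_EFinP; apply: measurable_funM => //.
      exact: measurable_funS mrh.
    - exact: measurable_funS mJ.
  have h2 : \int[leb2 R]_(x in ball2 (0%R, 0%R) r) \int[leb2 R]_y F (x, y) <=
            \int[leb2 R]_x \int[leb2 R]_y F (x, y).
    apply: ge0_subset_integral => //.
    by move=> x _; apply: integral_ge0 => y _.
  have h3 : \int[leb2 R]_(x in ball2 (0%R, 0%R) r) (rh x * d)%:E =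
            (\int[leb2 R]_(x in ball2 (0%R, 0%R) r) (rh x)%:E) * d%:E.
    under eq_integral => x _ do rewrite EFinM.
    rewrite ge0_integralZr //.
    - by apply/measurable_EFinP; exact: measurable_funS mrh.
    - by move=> x _; rewrite lee_fin.
  have : (sigma * d)%:E <= M%:E.
    rewrite EFinM; apply: le_trans (lee_wpmul2r _ (ltW hs)) _; first by rewrite lee_fin.
    by rewrite -h3; apply: le_trans h1 (le_trans h2 BM).
  rewrite lee_fin => h.
  by rewrite ler_pdivlMr // mulrC.
have Ms0 : (0 <= M / sigma)%R by rewrite divr_ge0 // ltW.
have hA : A <= (M / sigma + L * n)%:E.
  clearbody A.
  rewrite leNgt; apply/negP; move: key; case: A => [a| |] key hlt.
  - have := key (a - L * n)%R.
    rewrite subrK lexx; move: hlt; rewrite lte_fin => hlt.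
    have -> : (0 <= a - L * n)%R by lra.
    move=> /(_ isT isT); lra.
  - have := key (M / sigma + 1)%R; rewrite leey.
    have -> : (0 <= M / sigma + 1)%R by lra.
    move=> /(_ isT isT); lra.
  - by rewrite ltNge leNye in hlt.
apply: le_trans hA _; rewrite lee_fin lerD2l.
by rewrite ler_wpM2l.
Qed.
End core.
Section n2.
Context (R : realType).
Local Open Scope ereal_scope.
Lemma N2E (f : R * R -> R) :
  \int[leb2 R]_x (f x ^+ 2)%:E = ('N[leb2 R]_(2%:E) [EFin \o f]) ^+ 2.
Proof.
rewrite unlock /=.
rewrite poweR12_sqrt; last by apply: integral_ge0 => x _; rewrite ?lee_fin ?powR_ge0 ?poweR_ge0.
have X0 : 0 <= \int[leb2 R]_x (`|f x| `^ 2)%:E.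
  by apply: integral_ge0 => x _; rewrite ?lee_fin ?powR_ge0 ?poweR_ge0.
have h := sqr_sqrte X0.
transitivity (\int[leb2 R]_x (`|f x| `^ 2)%:E); last exact: (esym h).
apply: eq_integral => x _ /=.
by rewrite ?poweR_EFin powR_mulrn // real_normK // num_real.
Qed.
End n2.
Theorem lemma3p1 (R : realType) (rho u : nat -> R * R -> R) :
  (forall n, measurable_fun setT (rho n)) ->
  (forall n x, 0 <= rho n x) ->
  (exists r sigma : R, 0 < r /\ 0 < sigma /\
     forall n, (sigma%:E < \int[leb2 R]_(x in ball2 (0%R, 0%R) r) (rho n x)%:E)%E) ->
  (forall n, measurable_fun setT (u n)) ->
  (exists C : R, forall n, ('N[leb2 R]_(2%:E) [EFin \o u n] <= C%:E)%E) ->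
  (exists M : R, forall n, (B1 (rho n) (fun x => (u n x ^+ 2)%R) <= M%:E)%E) ->
  (exists K : R, forall n,
     ((\int[leb2 R]_x (ln (1 + norm2 x) * u n x ^+ 2)%R%:E) <= K%:E)%E)
  /\
  ((fun n => B1 (rho n) (fun x => (u n x ^+ 2)%R)) @ \oo --> 0%E ->
   (fun n => ('N[leb2 R]_(2%:E) [EFin \o u n])%E) @ \oo --> 0%E ->
   (fun n => (\int[leb2 R]_x (ln (1 + norm2 x) * u n x ^+ 2)%R%:E)%E) @ \oo --> 0%E).
Proof.
move=> mrho rho0 [r [s [r0 [s0 hs]]]] mu [C hC] [M hM].
have Nb : forall n, (\int[leb2 R]_x (u n x ^+ 2)%:E <= (C ^+ 2)%:E)%E.
  move=> n; rewrite N2E expr2 EFinM.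
  have := hC n; have := Lnorm_ge0 (leb2 R) (2%:E) (EFin \o u n) => h0 h1.
  by apply: lee_pmul.
split.
  exists (M / s + ln (1 + r) * C ^+ 2) => n.
  exact: core.
move=> hB hN.
set L := ln (1 + r).
have L0 : (0 <= L)%R by apply: ln_ge0; lra.
pose h n := (B1 (rho n) (fun x => (u n x ^+ 2)%R) * (s^-1)%:E +
             L%:E * \int[leb2 R]_x (u n x ^+ 2)%:E)%E.
apply: (@squeeze_cvge _ _ _ _ (cst 0%E) _ h).
- apply: nearW => n; apply/andP; split.
    by apply: integral_ge0 => x _; rewrite lee_fin mulr_ge0 ?sqr_ge0 // ln_ge0 // lerDl norm2_ge0.
  have N0 : (0 <= \int[leb2 R]_x (u n x ^+ 2)%:E)%E.
    by apply: integral_ge0 => x _; rewrite lee_fin sqr_ge0.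
  have Nfin : (\int[leb2 R]_x (u n x ^+ 2)%:E = (fine (\int[leb2 R]_x (u n x ^+ 2)%:E))%:E)%E.
    by apply/esym/fineK; rewrite ge0_fin_numE // (le_lt_trans (Nb n)) ?ltry.
  have B0 : (0 <= B1 (rho n) (fun x => (u n x ^+ 2)%R))%E.
    apply: integral_ge0 => x _; apply: integral_ge0 => y _.
    by rewrite lee_fin mulr_ge0 ?sqr_ge0 // mulr_ge0 // ln_ge0 // lerDl norm2_ge0.
  rewrite /h; move: B0 (@core R (rho n) (u n) r s) .
  case: (B1 (rho n) (fun x => (u n x ^+ 2)%R)) => [b| |] B0 cr.
  + rewrite Nfin -!EFinM -EFinD.
    by apply: cr => //; rewrite -Nfin.
  + rewrite gt0_mulye ?lte_fin ?invr_gt0 // Nfin -EFinM.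
    by rewrite addye // leey.
  + by move: B0; rewrite leeNy_eq.
- exact: cvg_cst.
- rewrite -[0%E](adde0 0) -[X in (X + _)%E](mul0e (s^-1)%:E) -[X in (_ + X)%E](mule0 L%:E).
  apply: cvgeD => //.
    by apply: cvgeZr => //; exact: hB.
  apply: cvgeZl => //.
  have -> : (fun n => \int[leb2 R]_x (u n x ^+ 2)%:E)%E =
            (fun n => ('N[leb2 R]_(2%:E) [EFin \o u n]) * ('N[leb2 R]_(2%:E) [EFin \o u n]))%E.
    by apply/funext => n; rewrite N2E.
  rewrite -[0%E](mule0 0).
  by apply: cvgeM => //; exact: hN.
Qed.
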